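(* Let $p$ be an odd prime, let $v$ be an integer with $1<v<p-1$, let $g\in\{2,\dots,p-1\}$ be a primitive root modulo $p$, and let $t\ge 1$. For $z=(z(0),\dots,z(t-1))\in\{0,\dots,v-1\}^t$ let $$\lambda(z)=\#\{x\in\{0,1,\dots,p-2\}:\ (g^{x+\iota}\,\%\,p)\,\%\,v=z(\iota)\text{ for all }0\le\iota<t\}.$$ Write $p=q\,g^{t-1}+r$ with integers $q\ge 0$ and $0\le r<g^{t-1}$. Then for every $z\in\{0,\dots,v-1\}^t$, $$\left\lfloor \frac{g}{v}\right\rfloor^{t-1}\left\lfloor\frac{q}{v}\right\rfloor\ \le\ \lambda(z)\ \le\ \left\lceil\frac{g}{v}\right\rceil^{t-1}\left(\left\lfloor\frac{q}{v}\right\rfloor+1\right).$$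
   Context: For integers $x$ and $m\ge1$, $x\,\%\,m$ denotes the least nonnegative remainder of $x$ modulo $m$. Thus $\lambda(z)$ is the number of (cyclic) occurrences of the tuple $z$ in the periodic sequence $\big((g^{i}\,\%\,p)\,\%\,v\big)_{i}$ of period $p-1$. *)

(* Defs.v *)
From mathcomp Require Import all_boot.
Set Implicit Arguments. Unset Strict Implicit. Unset Printing Implicit Defensive.

Definition primitive_root_mod (p g : nat) : Prop :=
  coprime g p /\ g ^ (p - 1) %% p = 1 %% p /\
  forall k, 0 < k < p - 1 -> g ^ k %% p != 1.

Definition lambda (p v g t : nat) (z : 'I_t -> 'I_v) : nat :=
  #|[set x : 'I_(p - 1) | [forall i : 'I_t, (g ^ (x + i) %% p) %% v == z i]]|.

Definition ceil_div (a d : nat) : nat := (a + d - 1) %/ d.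
Arguments lambda : clear implicits.

(* Main.v *)
Require Import Defs.
From mathcomp Require Import all_boot.
From mathcomp Require Import zify.
Set Implicit Arguments. Unset Strict Implicit. Unset Printing Implicit Defensive.

Lemma sum_split_mul (g m : nat) (F : nat -> nat) :
  \sum_(0 <= K < m * g) F K = \sum_(0 <= K' < m) \sum_(0 <= d < g) F (K' * g + d).
Proof.
elim: m => [|m IH]; first by rewrite mul0n !big_geq.
rewrite big_nat_recr //= mulSn addnC (big_cat_nat _ (n := m * g)) //=; last by rewrite leq_addr.
rewrite IH; congr (_ + _).
rewrite -{1}(add0n (m * g)) big_addn addnC addnK.
by apply: eq_bigr => d _; rewrite addnC.
Qed.

Definition goodD (g n : nat) (A : nat -> pred nat) (K : nat) : bool :=
  all (fun j => A j ((K %/ g ^ j) %% g)) (iota 0 n).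

Lemma goodDS (g n : nat) (A : nat -> pred nat) (K : nat) :
  goodD g n.+1 A K = A 0 (K %% g) && goodD g n (fun j => A j.+1) (K %/ g).
Proof.
rewrite /goodD /= expn0 divn1; congr (_ && _).
have -> : iota 1 n = map (addn 1) (iota 0 n) by rewrite -iotaDl.
rewrite all_map; apply: eq_all => j /=.
by rewrite add1n expnS divnMA.
Qed.

Lemma digits_bound (g n : nat) (A : nat -> pred nat) (F : nat -> nat) (a b lo hi : nat) :
  0 < g ->
  (forall j, a <= \sum_(0 <= d < g) A j d <= b) ->
  (forall K, K < g ^ n -> lo <= F K <= hi) ->
  a ^ n * lo <= \sum_(0 <= K < g ^ n) goodD g n A K * F K <= b ^ n * hi.
Proof.
move=> g0; elim: n A F lo hi => [|n IH] A F lo hi hA hF.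
  rewrite !expn0 !mul1n big_nat1 /goodD /= mul1n.
  by apply: hF; rewrite expn0.
have -> : g ^ n.+1 = g ^ n * g by rewrite expnS mulnC.
rewrite sum_split_mul.
set F' := fun K' => \sum_(0 <= d < g) A 0 d * F (K' * g + d).
have -> : \sum_(0 <= K' < g ^ n) \sum_(0 <= d < g)
     goodD g n.+1 A (K' * g + d) * F (K' * g + d) =
   \sum_(0 <= K' < g ^ n) goodD g n (fun j => A j.+1) K' * F' K'.
  apply: eq_big_nat => K' _; rewrite /F' big_distrr /=.
  apply: eq_big_nat => d /andP[_ hd]; rewrite goodDS.
  have -> : (K' * g + d) %% g = d by rewrite modnMDl modn_small.
  have -> : (K' * g + d) %/ g = K' by rewrite divnMDl // divn_small // addn0.
  by case: (A 0 d); case: (goodD _ _ _ _); rewrite ?mul1n ?mul0n.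
rewrite !expnS -!mulnA mulnCA [b * _]mulnCA.
apply: IH => [j|K' hK']; first exact: hA.
have hFK : forall d, d < g -> lo <= F (K' * g + d) <= hi.
  move=> d hd; apply: hF; rewrite expnS.
  apply: (leq_trans (n := K'.+1 * g)); first by rewrite mulSn; lia.
  by rewrite mulnC leq_mul2l hK' orbT.
have /andP[ha hb] := hA 0.
apply/andP; split.
  apply: (leq_trans (leq_mul ha (leqnn lo))).
  rewrite /F' big_distrl /= big_nat_cond [X in _ <= X]big_nat_cond.
apply: leq_sum => d /andP[/andP[_ hd] _].
  by case: (A 0 d); rewrite ?mul1n ?mul0n //; case/andP: (hFK d hd).
apply: (leq_trans _ (leq_mul hb (leqnn hi))).
rewrite /F' big_distrl /= big_nat_cond [X in _ <= X]big_nat_cond.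
apply: leq_sum => d /andP[/andP[_ hd] _].
by case: (A 0 d); rewrite ?mul1n ?mul0n //; case/andP: (hFK d hd).
Qed.

Lemma block_sum (v : nat) (Q : pred nat) :
  (forall y, Q (y + v) = Q y) ->
  forall b, \sum_(b <= y < b + v) Q y = \sum_(0 <= y < v) Q y.
Proof.
move=> hQ; elim=> [|b IH]; first by rewrite add0n.
rewrite -IH.
have h1 : \sum_(b <= y < (b + v).+1) (Q y : nat) = Q b + \sum_(b.+1 <= y < (b + v).+1) Q y.
  by rewrite big_ltn // ltnS leq_addr.
have h2 : \sum_(b <= y < (b + v).+1) (Q y : nat) = \sum_(b <= y < b + v) Q y + Q (b + v).
  by rewrite big_nat_recr // leq_addr.
rewrite addSn; move: h1 h2; rewrite hQ => ->; lia.
Qed.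

Lemma count_periodic (v : nat) (Q : pred nat) :
  0 < v -> (forall y, Q (y + v) = Q y) -> \sum_(0 <= y < v) Q y = 1 ->
  forall m a, m %/ v <= \sum_(a <= y < a + m) Q y <= (m + v - 1) %/ v.
Proof.
move=> v0 hQ h1 m; elim: m {-2}m (leqnn m) => [|M IH] m hm a.
  by move: hm; rewrite leqn0 => /eqP ->; rewrite addn0 big_geq // div0n.
have hb : \sum_(a <= y < a + v) (Q y : nat) = 1 by rewrite block_sum.
case: m hm => [|m] hm; first by rewrite addn0 big_geq // div0n.
case: (ltnP m.+1 v) => hmv.
  rewrite divn_small //.
  apply: (leq_trans (n := \sum_(a <= y < a + v) (Q y : nat))).
    rewrite (big_cat_nat _ (n := a + m.+1) (p := a + v)) ?leq_addr ?leq_add2l ?(ltnW hmv) //=.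
  by rewrite hb leq_divRL // mul1n; lia.
have -> : \sum_(a <= y < a + m.+1) (Q y : nat) = 1 + \sum_((a + v) <= y < (a + v) + (m.+1 - v)) Q y.
  have -> : a + v + (m.+1 - v) = a + m.+1 by lia.
  by rewrite -hb -big_cat_nat ?leq_addr //; lia.
have /andP[l u] := IH (m.+1 - v) ltac:(lia) (a + v).
have e1 : m.+1 %/ v = (m.+1 - v) %/ v + 1.
  by rewrite -{1}(subnK hmv) divnDr // divnn v0.
have e2 : (m.+1 + v - 1) %/ v = (m.+1 - v + v - 1) %/ v + 1.
  have -> : m.+1 + v - 1 = (m.+1 - v + v - 1) + v by lia.
  by rewrite divnDr // divnn v0.
rewrite e1 e2; apply/andP; split; lia.
Qed.

Lemma affine_inj (v p e d1 d2 : nat) : coprime v p -> d1 < v -> d2 < v ->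
  (e + p * d1) %% v = (e + p * d2) %% v -> d1 = d2.
Proof.
move=> cop h1 h2 he.
wlog le : d1 d2 h1 h2 he / d2 <= d1.
  move=> W; case: (leqP d2 d1) => h; first exact: W.
  by symmetry; apply: W => //; apply: ltnW.
have : (e + p * d1 == e + p * d2 %[mod v]) by apply/eqP.
rewrite eqn_modDl eqn_mod_dvd ?leq_mul2l ?le ?orbT // -mulnBr Gauss_dvdr //.
case: (posnP (d1 - d2)) => [|pos] hd; first lia.
have := dvdn_leq pos hd; lia.
Qed.

Lemma sum_affine_class (v p e c : nat) : 0 < v -> coprime v p -> c < v ->
  \sum_(0 <= d < v) ((e + p * d) %% v == c) = 1.
Proof.
move=> v0 cop hc.
rewrite big_mkord.
have -> : \sum_(d < v) (((e + p * d) %% v == c) : nat) = \sum_(d < v | (e + p * d) %% v == c) 1.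
  by rewrite [RHS]big_mkcond /=; apply: eq_bigr => i _; case: (_ == _).
rewrite sum1_card.
pose phi (d : 'I_v) : 'I_v := Ordinal (ltn_pmod (e + p * d) v0).
have phiI : injective phi.
  move=> d1 d2 /(congr1 val) /= h; apply: val_inj; exact: affine_inj cop (ltn_ord d1) (ltn_ord d2) h.
have -> : #|[pred d : 'I_v | (e + p * d) %% v == c]| = #|phi @^-1: [set Ordinal hc]|.
  by apply: eq_card => d; rewrite !inE.
by rewrite card_preimset // cards1.
Qed.

Lemma chain (n : nat) (A B : nat -> Prop) :
  (forall i, i < n -> A i -> (A i.+1 <-> B i)) ->
  ((forall i, i <= n -> A i) <-> (A 0 /\ forall i, i < n -> B i)).
Proof.
elim: n => [|n IH] h.
  split; first by move=> H; split => [|i //]; exact: H.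
  by case=> H _ i; rewrite leqn0 => /eqP ->.
have IH'' : (forall i, i <= n -> A i) <-> A 0 /\ (forall i, i < n -> B i).
  apply: IH => i hi; apply: h; lia.
split.
  move=> H.
  have [a0 hb] : A 0 /\ (forall i, i < n -> B i) by apply/IH'' => i hi; apply: H; lia.
  split => // i; rewrite ltnS leq_eqVlt => /orP[/eqP ->|hi]; last exact: hb.
  by apply/(h n (ltnSn n) (H n (leqnSn n))); apply: H.
case=> a0 hb.
have hn : forall i, i <= n -> A i by apply/IH''; split => // i hi; apply: hb; lia.
move=> i; rewrite leq_eqVlt => /orP[/eqP ->|hi]; last by apply: hn; lia.
by apply/(h n (ltnSn n) (hn n (leqnn n))); apply: hb.
Qed.

Lemma alg (b Y Y' q r a p g : nat) : b = q * p + Y -> g * b = a * p + Y' -> a = q * g + r -> Y' + p * r = g * Y.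
Proof. move=> h1 h2 h3. subst. lia. Qed.

Lemma subS_pred (n i : nat) : i < n -> n - i = (n.-1 - i).+1.
Proof. lia. Qed.
Lemma idx1 (n i : nat) : i < n -> n.-1 - (n.-1 - i) = i.
Proof. lia. Qed.
Lemma idx2 (n i : nat) : i < n -> n - (n.-1 - i) = i.+1.
Proof. lia. Qed.
Lemma idx3 (n j : nat) : j < n -> n.-1 - j < n.
Proof. lia. Qed.
Lemma subS_pred2 (n i : nat) : i < n -> n - i.+1 = n.-1 - i.
Proof. lia. Qed.

Section M3.
Variables (p v g n K y : nat) (zz : nat -> nat).
Hypotheses (p0 : 0 < p) (g0 : 0 < g) (hz : forall i, zz i < v)
  (hK1 : K * p <= g ^ n * y) (hK2 : g ^ n * y < K.+1 * p) (hy : y < p).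

Definition Aj := fun j d => (g * zz (n.-1 - j)) %% v == (zz (n - j) + p * d) %% v.

Lemma Qform i : i <= n -> g ^ i * y %/ p = K %/ g ^ (n - i).
Proof.
move=> hi.
have hK : g ^ n * y %/ p = K.
  by apply/eqP; rewrite eqn_leq leq_divRL // hK1 /= -ltnS ltn_divLR // hK2.
rewrite -hK -divnMA -(@divnMl (g ^ (n - i))) ?expn_gt0 ?g0 //.
by rewrite mulnA -expnD subnK // [p * _]mulnC.
Qed.

Lemma step i : i < n ->
  g ^ i.+1 * y %% p + p * ((K %/ g ^ (n.-1 - i)) %% g) = g * (g ^ i * y %% p).
Proof.
move=> hi.
have e1 := Qform (ltnW hi). have e2 := Qform hi.
set a := K %/ g ^ (n.-1 - i).
have ea : K %/ g ^ (n - i) = a %/ g.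
  by rewrite /a -divnMA -expnSr -subS_pred.
rewrite subS_pred2 // -/a ea in e2 e1.
apply: (@alg (g ^ i * y) _ _ (a %/ g) _ a p g).
- by rewrite -e1 -divn_eq.
- by rewrite mulnA -expnS -e2 -divn_eq.
- by rewrite -divn_eq.
Qed.

Lemma pr_char :
  (forall i, i <= n -> (g ^ i * y %% p) %% v == zz i) <-> (y %% v == zz 0 /\ goodD g n Aj K).
Proof.
rewrite (@chain n (fun i => (g ^ i * y %% p) %% v == zz i)
   (fun i => Aj (n.-1 - i) ((K %/ g ^ (n.-1 - i)) %% g))).
- rewrite expn0 mul1n (modn_small hy).
  split; case=> h1 h2; split => //.
    apply/allP => j; rewrite mem_iota add0n /= => hj.
    have := h2 _ (idx3 hj); rewrite idx1 //.
  move=> i hi; apply: (allP h2); by rewrite mem_iota add0n idx3.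
move=> i hi /eqP hA.
have hs := step hi.
rewrite /Aj idx1 // idx2 //.
have -> : ((g ^ i.+1 * y %% p) %% v == zz i.+1) =
   (g ^ i.+1 * y %% p + p * ((K %/ g ^ (n.-1 - i)) %% g) == zz i.+1 + p * ((K %/ g ^ (n.-1 - i)) %% g) %[mod v]).
  by rewrite eqn_modDr (modn_small (hz _)).
rewrite hs.
have -> : (g * (g ^ i * y %% p)) %% v = (g * zz i) %% v by rewrite -modnMmr hA.
by [].
Qed.
End M3.

Lemma split_intervals (lo : nat -> nat) (F : nat -> nat) N :
  lo 0 = 0 -> (forall k, lo k <= lo k.+1) ->
  \sum_(0 <= y < lo N) F y = \sum_(0 <= K < N) \sum_(lo K <= y < lo K.+1) F y.
Proof.
move=> h0 hm; elim: N => [|N IH]; first by rewrite h0 !big_geq.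
rewrite big_nat_recr //= -IH (big_cat_nat _ (n := lo N)) //.
Qed.

Lemma lo_le a G y : 0 < G -> ((a + G - 1) %/ G <= y) = (a <= G * y).
Proof.
move=> G0; rewrite -ltnS ltn_divLR //.
by apply/idP/idP; lia.
Qed.

Lemma lo_succ a p G : 0 < G ->
  (a + p + G - 1) %/ G = (a + G - 1) %/ G + p %/ G + (G <= (a + G - 1) %% G + p %% G).
Proof.
move=> G0; rewrite -divnD //; congr (_ %/ _); lia.
Qed.

Lemma periodic_res v r : 0 < v -> r < v ->
  forall m a, m %/ v <= \sum_(a <= y < a + m) (y %% v == r) <= (m + v - 1) %/ v.
Proof.
move=> v0 hr; apply: count_periodic => //.
  by move=> y; rewrite modnDr.
rewrite -(@sum_affine_class v 1 0 r) //; last exact: coprimen1.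
by apply: eq_bigr => d _; rewrite add0n mul1n.
Qed.

Lemma lo1_ge p G : 0 < G -> ~~ (G %| p) -> (p %/ G).+1 <= (1 * p + G - 1) %/ G.
Proof.
move=> G0 nd; rewrite leq_divRL //; have := divn_eq p G.
have : 0 < p %% G by rewrite lt0n.
move: (p %/ G) (p %% G) => a b; lia.
Qed.

Lemma divn_pred_ndvd p v : 0 < p -> 0 < v -> ~~ (v %| p) -> p %/ v = p.-1 %/ v.
Proof.
by case: p => // p _ v0 nd; rewrite divnS // (negbTE nd).
Qed.

Definition loF p G K := (K * p + G - 1) %/ G.

Lemma c_bounds (p v G K r : nat) :
  0 < G -> 0 < p -> 0 < v -> r < v -> K < G ->
  (G %| p -> G = 1) -> ~~ (v %| p) ->
  (p %/ G) %/ v <= \sum_(loF p G K <= y < loF p G K.+1) ((y != 0) && (y %% v == r))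
  <= (p %/ G) %/ v + 1.
Proof.
move=> G0 p0 v0 hr hK hGp hvp; set lo := loF p G.
have hs : lo K.+1 = lo K + p %/ G + (G <= (K * p + G - 1) %% G + p %% G).
  by rewrite /lo /loF -lo_succ // mulSn; congr (_ %/ _); lia.
have hq1 : p %/ G <= lo K.+1 - lo K by rewrite hs; lia.
have hq2 : lo K.+1 - lo K <= p %/ G + 1.
  rewrite hs; have := leq_b1 (G <= (K * p + G - 1) %% G + p %% G). move: (nat_of_bool _) (lo K) (p %/ G) => x y z. lia.
have hm : lo K.+1 = lo K + (lo K.+1 - lo K) by rewrite hs; move: (nat_of_bool _) (lo K) (p %/ G) => x y z; lia.
set m := lo K.+1 - lo K in hq1 hq2 hm.
clearbody m.
have := periodic_res v0 hr m (lo K); rewrite -hm => /andP[l u].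
apply/andP; split; last first.
  apply: (leq_trans (n := \sum_(lo K <= y < lo K.+1) (y %% v == r))).
    by apply: leq_sum => y _; case: (y != 0); case: (_ == _).
  apply: (leq_trans u).
  have -> : p %/ G %/ v + 1 = (p %/ G + 1 + v - 1) %/ v.
    have -> : p %/ G + 1 + v - 1 = p %/ G + v by rewrite addnAC addnK.
    by rewrite divnDr // divnn v0.
  by apply: leq_div2r; rewrite leq_sub2r // leq_add2r.
case: K hK hs hm hq1 hq2 l u => [|K] hK hs hm hq1 hq2 l u.
  have lo0 : lo 0 = 0 by rewrite /lo /loF mul0n add0n divn_small // subn1 prednK.
  have hlo : 0 < lo 1.
    rewrite lt0n; apply/negP => /eqP h.
    have := lo_le (1 * p) 0 G0; rewrite -/(loF p G 1) -/(lo 1) h leqnn muln0 => /esym.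
    by rewrite leqn0 mul1n => /eqP hp; rewrite hp in p0.
  rewrite lo0 big_ltn // /=.
  have -> : \sum_(1 <= y < lo 1) ((y != 0) && (y %% v == r)) = \sum_(1 <= y < 1 + (lo 1).-1) (y %% v == r).
    rewrite add1n prednK // big_nat_cond [RHS]big_nat_cond; apply: eq_bigr => y /andP[/andP[hy _] _].
    by rewrite -lt0n hy.
  have /andP[l1 _] := periodic_res v0 hr (lo 1).-1 1.
  apply: leq_trans l1.
  case: (boolP (G %| p)) => hd.
    have G1 := hGp hd.
    have -> : lo 1 = p by rewrite /lo /loF G1 mul1n addnK divn1.
    by rewrite G1 divn1 -divn_pred_ndvd.
  apply: leq_div2r; have := lo1_ge G0 hd; rewrite -/(loF p G 1) -/(lo 1).
  by move=> h; rewrite -ltnS prednK.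
have hlo : 0 < lo K.+1.
  rewrite lt0n; apply/negP => /eqP h.
  have := lo_le (K.+1 * p) 0 G0; rewrite -/(loF p G K.+1) -/(lo K.+1) h leqnn muln0 => /esym.
  by rewrite leqn0 muln_eq0 /= => /eqP hp; rewrite hp in p0.
apply: (leq_trans (leq_div2r v hq1)); apply: (leq_trans l).
rewrite big_nat_cond [X in _ <= X]big_nat_cond; apply: leq_sum => y /andP[/andP[hy _] _].
have -> : (y != 0) by rewrite -lt0n; exact: leq_trans hlo hy.
by [].
Qed.

Lemma pow_inj p g x1 x2 : prime p -> primitive_root_mod p g -> 0 < g ->
  x1 < p - 1 -> x2 < p - 1 -> g ^ x1 %% p = g ^ x2 %% p -> x1 = x2.
Proof.
move=> pp [cop [_ hpr]] g0.
wlog le : x1 x2 / x2 <= x1.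
  move=> W h1 h2 he; case: (leqP x2 x1) => h; first exact: W.
  by symmetry; apply: W => //; apply: ltnW.
move=> h1 h2 he.
have p1 := prime_gt1 pp.
have copx : coprime p (g ^ x2) by apply: coprimeXr; rewrite coprime_sym.
set k := x1 - x2.
have ex : g ^ x1 = g ^ x2 * g ^ k by rewrite -expnD subnKC.
have gk : 0 < g ^ k by rewrite expn_gt0 g0.
have : (g ^ x2 * g ^ k == g ^ x2 * 1 %[mod p]) by rewrite muln1 -ex; apply/eqP.
rewrite eqn_mod_dvd ?leq_mul2l ?gk ?orbT // -mulnBr Gauss_dvdr // -eqn_mod_dvd //.
rewrite (modn_small p1) => /eqP hk.
case: (posnP k) => [k0|kpos]; first by move: k0; rewrite /k; lia.
have := hpr k; rewrite kpos hk eqxx /= => /(_ _)/negP; case.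
  by rewrite /k; lia.
by [].
Qed.

Lemma lambda_sum p v g t (z : 'I_t -> 'I_v) : prime p -> primitive_root_mod p g -> 0 < g ->
  lambda p v g t z =
  \sum_(0 <= y < p) ((y != 0) && [forall i : 'I_t, (g ^ i * y %% p) %% v == z i]).
Proof.
move=> pp hpr g0.
have p0 := prime_gt0 pp.
set P := fun y : nat => [forall i : 'I_t, (g ^ i * y %% p) %% v == z i].
pose hh (x : 'I_(p - 1)) : 'I_p := Ordinal (ltn_pmod (g ^ x) p0).
have hhI : injective hh.
  move=> x1 x2 /(congr1 val) /= h; apply: val_inj.
  exact: pow_inj pp hpr g0 (ltn_ord x1) (ltn_ord x2) h.
have hh0 : forall x, val (hh x) != 0.
  move=> x /=; apply/negP => /eqP h.
  have cop : coprime p (g ^ x) by apply: coprimeXr; rewrite coprime_sym; case: hpr.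
  have : p %| g ^ x * 1 by rewrite muln1 /dvdn h.
  by rewrite Gauss_dvdr // dvdn1 => /eqP p1; rewrite p1 in pp.
have S1 : [set x : 'I_(p - 1) | [forall i : 'I_t, (g ^ (x + i) %% p) %% v == z i]]
          = [set x | P (val (hh x))].
  apply/setP => x; rewrite !inE; apply: eq_forallb => i /=.
  by rewrite modnMmr -expnD addnC.
have surj : forall y : 'I_p, val y != 0 -> y \in hh @: setT.
  have sub : hh @: setT \subset [set y : 'I_p | val y != 0].
    by apply/subsetP => _ /imsetP[x _ ->]; rewrite inE hh0.
  have card : #|hh @: setT| = #|[set y : 'I_p | val y != 0]|.
    rewrite card_imset // cardsT card_ord.
    have -> : [set y : 'I_p | val y != 0] = [set~ Ordinal p0].
      by apply/setP => y; rewrite !inE -val_eqE.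
    by rewrite cardsC1 card_ord subn1.
  have eqAB := elimT (subset_cardP card) sub.
  by move=> y ynz; rewrite eqAB inE.
have S2 : hh @: [set x | P (val (hh x))] = [set y : 'I_p | (val y != 0) && P y].
  apply/setP => y; rewrite inE; apply/imsetP/andP.
    by case=> x; rewrite inE => Px ->; split => //; exact: hh0.
  case=> ynz Py; have /imsetP[x _ ex] := surj y ynz.
  by exists x => //; rewrite inE -ex.
rewrite /lambda S1 -(card_imset _ hhI) S2 big_mkord.
rewrite -sum1_card big_mkcond /=; apply: eq_bigr => y _.
by rewrite inE; case: (_ && _).
Qed.

Lemma not_le_pred p : 0 < p -> p <= p - 1 -> False.
Proof. lia. Qed.

Lemma loF_mono p G k1 k2 : k1 <= k2 -> loF p G k1 <= loF p G k2.
Proof.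
by move=> h; apply: leq_div2r; rewrite leq_sub2r // leq_add2r leq_mul2r h orbT.
Qed.

Theorem theorem8 (p v g t : nat)
  (Hp : prime p) (Hodd : odd p)
  (Hv1 : 1 < v) (Hv2 : v < p - 1)
  (Hg1 : 2 <= g) (Hg2 : g <= p - 1) (Hprim : primitive_root_mod p g)
  (Ht : 1 <= t) :
  let q := p %/ g ^ (t - 1) in
  forall z : 'I_t -> 'I_v,
    (g %/ v) ^ (t - 1) * (q %/ v) <= lambda p v g t z /\
    lambda p v g t z <= (ceil_div g v) ^ (t - 1) * (q %/ v + 1).
Proof.
move=> q z.
have p0 := prime_gt0 Hp.
have p1 := prime_gt1 Hp.
have g0 : 0 < g by apply: leq_trans Hg1.
have v0 : 0 < v by apply: ltnW.
set n := t - 1 in q *.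
have tn : t = n.+1 by rewrite /n subn1 prednK.
set G := g ^ n in q *.
have G0 : 0 < G by rewrite expn_gt0 g0.
pose zz := fun i => oapp (fun j : 'I_t => nat_of_ord (z j)) 0 (insub i).
have hz : forall i, zz i < v.
  by move=> i; rewrite /zz; case: (insub i) => [j|] //=.
have hzz : forall i : 'I_t, zz i = z i by move=> i; rewrite /zz valK.
have copvp : coprime v p.
  rewrite coprime_sym prime_coprime //; apply/negP => /(dvdn_leq v0).
  by rewrite leqNgt (leq_trans Hv2) // leq_subr.
have hvp : ~~ (v %| p).
  apply/negP => /(primeP Hp).2 /orP[] /eqP hv; first by rewrite hv in Hv1.
  by move: Hv2; rewrite hv ltnNge leq_subr.
have hGp : G %| p -> G = 1.
  move=> /(primeP Hp).2 /orP[] /eqP // hG.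
  have [n0|npos] := posnP n.
    by move: hG; rewrite /G n0 expn0 => h; rewrite -h in p1.
  have : g %| p by rewrite -hG /G dvdn_exp.
  move=> /(primeP Hp).2 /orP[] /eqP hg; first by rewrite hg in Hg1.
  by move: Hg2; rewrite hg => /(not_le_pred p0).
rewrite (lambda_sum z Hp Hprim g0).
have loG : loF p G G = p.
  rewrite /loF -addnBA // [G * p]mulnC divnMDl // divn_small ?addn0 //.
  by rewrite subn1 ltn_predL.
have lo0 : loF p G 0 = 0.
  by rewrite /loF mul0n add0n divn_small // subn1 ltn_predL.
have -> : \sum_(0 <= y < p) ((y != 0) && [forall i : 'I_t, (g ^ i * y %% p) %% v == z i])
   = \sum_(0 <= K < G) goodD g n (Aj p v g n zz) K *
       \sum_(loF p G K <= y < loF p G K.+1) ((y != 0) && (y %% v == zz 0)).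
  transitivity (\sum_(0 <= y < loF p G G)
     ((y != 0) && [forall i : 'I_t, (g ^ i * y %% p) %% v == z i])); first by rewrite loG.
  rewrite (@split_intervals (loF p G) _ G lo0); last by move=> k; apply: loF_mono.
  apply: eq_big_nat => K /andP[_ hK]; rewrite big_distrr /=.
  apply: eq_big_nat => y /andP[h1 h2].
  have hK1 : K * p <= G * y by rewrite -lo_le.
  have hK2 : G * y < K.+1 * p.
    by rewrite ltnNge -lo_le // -ltnNge.
  have hy : y < p by rewrite -loG; apply: leq_trans h2 (loF_mono _ _ hK).
  have [H1 H2] := pr_char (p:=p) (v:=v) (g:=g) (n:=n) (K:=K) (y:=y) (zz:=zz) p0 g0 hz hK1 hK2 hy.
  have E : [forall i : 'I_t, (g ^ i * y %% p) %% v == z i] =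
           (y %% v == zz 0) && goodD g n (Aj p v g n zz) K.
    apply/idP/idP.
      move/forallP => H; apply/andP; apply: H1 => i hi.
      have hit : i < t by rewrite tn ltnS.
      by have := H (Ordinal hit); rewrite -hzz.
    move/andP => HH; have H := H2 HH; apply/forallP => i; rewrite -hzz; apply: H.
    by rewrite -ltnS -tn (ltn_ord i).
  by rewrite E; case: (y != 0); case: (_ == _); case: goodD.
have hA : forall j, g %/ v <= \sum_(0 <= d < g) Aj p v g n zz j d <= ceil_div g v.
  move=> j.
  have per : forall d, Aj p v g n zz j (d + v) = Aj p v g n zz j d.
    by move=> d; rewrite /Aj mulnDr addnA [_ + p * v]addnC modnMDl.
  have one : \sum_(0 <= d < v) Aj p v g n zz j d = 1.
    rewrite -(sum_affine_class (zz (n - j)) v0 copvp (ltn_pmod (g * zz (n.-1 - j)) v0)).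
    by apply: eq_bigr => d _; rewrite /Aj eq_sym.
  by have := count_periodic v0 per one g 0; rewrite add0n.
have hF : forall K, K < g ^ n -> q %/ v <=
     \sum_(loF p G K <= y < loF p G K.+1) ((y != 0) && (y %% v == zz 0)) <= q %/ v + 1.
  by move=> K hK; apply: c_bounds G0 p0 v0 (hz 0) hK hGp hvp.
have /andP[l u] := digits_bound g0 hA hF.
by split.
Qed.
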